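(* For $n \ge 0$ let $d(n) = \sum_{k \ge 0} w(n-k,k)$ (with $w(m,k)=0$ for $m<0$). Then: (i) $d(n) = c_{ie}(n)$ for all $n \ge 0$; (ii) $\displaystyle\sum_{n \ge 0} d(n) q^n = \frac{1-q^2+q^3}{1 - q - 2 q^2 + 2 q^3}$; (iii) for $n \ge 1$, $d(n) = 2^m - 1$ if $n = 2m-1$, and $d(n) = 3\cdot 2^{m-1} - 1$ if $n = 2m$.
   Context: A composition of $n \ge 0$ is a finite sequence $(c_1,\dots,c_t)$ of positive integers with $c_1+\cdots+c_t=n$; the empty composition is the unique composition of $0$. Let $C_{12}(n)$ be the set of compositions of $n$ all of whose parts lie in $\{1,2\}$. The number of water cells of a composition $(c_1,\dots,c_t)$ is $\sum_{i=1}^{t} \max\bigl(0, \min(\max_{j \le i} c_j, \max_{j \ge i} c_j) - c_i\bigr)$ (the number of unit squares that would hold water poured over its bargraph, in which column $i$ has height $c_i$). For $n,k \ge 0$, $W(n,k)$ is the set of compositions in $C_{12}(n)$ with exactly $k$ water cells and $w(n,k)=|W(n,k)|$. $C_{ie}(n)$ is the set of compositions $(c_1,\dots,c_t)$ of $n$ such that every internal part $c_2,\dots,c_{t-1}$ is even (so all compositions with $t \le 2$ are included, including the empty composition when $n=0$), and $c_{ie}(n)=|C_{ie}(n)|$. *)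

(* Defs.v *)
From mathcomp Require Import all_boot all_order all_algebra.
Set Implicit Arguments. Unset Strict Implicit. Unset Printing Implicit Defensive.
Import GRing.Theory.

Fixpoint seqs_len (A : seq nat) (k : nat) : seq (seq nat) :=
  if k is k'.+1 then [seq x :: s | x <- A, s <- seqs_len A k'] else [:: [::]].

(* All sequences of length <= n with entries in {1,...,n}: every composition
   of n occurs exactly once in this list. *)
Definition cand (n : nat) : seq (seq nat) :=
  flatten [seq seqs_len (iota 1 n) k | k <- iota 0 n.+1].

Definition is_comp (n : nat) (s : seq nat) : bool :=
  all (fun c => 0 < c) s && (sumn s == n).

Definition is_comp12 (n : nat) (s : seq nat) : bool :=
  is_comp n s && all (fun c => (c == 1) || (c == 2)) s.

(* Number of water cells of the bargraph of s (truncated subtraction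
   realizes max(0, .)). *)
Definition water (s : seq nat) : nat :=
  \sum_(i < size s)
    (minn (\max_(j < size s | j <= i) nth 0 s j)
          (\max_(j < size s | i <= j) nth 0 s j) - nth 0 s i).

Definition w (n k : nat) : nat :=
  count (fun s => is_comp12 n s && (water s == k)) (cand n).

Definition internal (s : seq nat) : seq nat := drop 1 (take (size s).-1 s).

Definition c_ie (n : nat) : nat :=
  count (fun s => is_comp n s && all (fun c => ~~ odd c) (internal s)) (cand n).

(* d(n) = sum_{k>=0} w(n-k,k); terms with k > n vanish (w(m,k)=0 for m<0). *)
Definition d (n : nat) : nat := \sum_(k < n.+1) w (n - k) k.

(* Main.v *)
Require Import Defs.
From mathcomp Require Import all_boot all_order all_algebra zify.
Import GRing.Theory.

Definition U (A : seq nat) (m : nat) : seq (seq nat) :=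
  flatten [seq seqs_len A k | k <- iota 0 m.+1].

Lemma candE n : cand n = U (iota 1 n) n.
Proof. by []. Qed.

Lemma mem_seqs_len A k s :
  (s \in seqs_len A k) = (size s == k) && all (mem A) s.
Proof.
elim: k s => [|k IH] s.
  by case: s => [|x s]; rewrite ?inE.
rewrite /=; apply/allpairsP/idP => [[[a b] /= [Ha Hb ->]] | ].
  rewrite IH in Hb; move/andP: Hb => [/eqP Hsb Hb].
  by rewrite /= Hsb eqxx /= Ha Hb.
case: s => [|x s] //= /andP[/eqP [Hs] /andP[Hx Ha]].
by exists (x, s); split => //; rewrite IH Hs eqxx Ha.
Qed.

Lemma uniq_seqs_len A k : uniq A -> uniq (seqs_len A k).
Proof.
move=> uA; elim: k => [|k IH] //=.
apply: allpairs_uniq => //.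
by move=> [a b] [c e] _ _ /= [-> ->].
Qed.

Lemma mem_U A m s : (s \in U A m) = (size s <= m) && all (mem A) s.
Proof.
apply/flatten_mapP/idP => [[k Hk] | /andP[Hs Ha]].
  rewrite mem_seqs_len => /andP[Hs ->]; rewrite mem_iota in Hk.
  by rewrite andbT -ltnS (eqP Hs).
exists (size s); first by rewrite mem_iota.
by rewrite mem_seqs_len eqxx.
Qed.

Lemma U_S A m : U A m.+1 = U A m ++ seqs_len A m.+1.
Proof. rewrite /U -addn1 iotaD map_cat flatten_cat /= ?cats0; congr (_ :: _ ++ _); rewrite cats0. Qed.

Lemma uniq_U A m : uniq A -> uniq (U A m).
Proof.
move=> uA; elim: m => [|m IH]; first by [].
rewrite U_S cat_uniq IH uniq_seqs_len // andbT.
apply/hasPn => s Hs; rewrite mem_U; move: Hs; rewrite mem_seqs_len => /andP[/eqP-> _].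
by rewrite ltnn.
Qed.

Lemma count_eq_uniq (T : eqType) (P : pred T) l1 l2 :
  uniq l1 -> uniq l2 -> (forall x, P x -> (x \in l1) = (x \in l2)) ->
  count P l1 = count P l2.
Proof.
move=> u1 u2 H; rewrite -!size_filter; apply: perm_size.
apply: uniq_perm; rewrite ?filter_uniq // => x.
rewrite !mem_filter; case Px: (P x) => //=; exact: H.
Qed.

Lemma count_U A m P :
  count P (U A m) = \sum_(k < m.+1) count P (seqs_len A k).
Proof.
by rewrite /U count_flatten sumnE !big_map -(big_mkord xpredT (fun k => count P (seqs_len A k))) /index_iota subn0.
Qed.

Lemma count_allpairs (B : seq nat) (t : seq (seq nat)) P :
  count P [seq x :: s | x <- B, s <- t] =
  \sum_(x <- B) count (fun s => P (x :: s)) t.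
Proof.
elim: B => [|a B IH] /=; first by rewrite big_nil.
by rewrite count_cat count_map big_cons IH.
Qed.

Lemma count_seqs_S A k P :
  count P (seqs_len A k.+1) =
  \sum_(x <- A) count (fun s => P (x :: s)) (seqs_len A k).
Proof. exact: count_allpairs. Qed.

Lemma count_U_S A m P :
  count P (U A m.+1) =
  P [::] + \sum_(x <- A) count (fun s => P (x :: s)) (U A m).
Proof.
rewrite [LHS]count_U big_ord_recl; congr (_ + _); first by rewrite /= addn0.
rewrite (eq_bigr (fun i : 'I_m.+1 => \sum_(x <- A) count (fun s => P (x :: s)) (seqs_len A i))); last first.
  by move=> i _; rewrite lift0 count_seqs_S.
rewrite exchange_big; apply: eq_bigr => x _.
by rewrite count_U.
Qed.

Lemma count_sum (T : Type) (P : pred T) l : count P l = \sum_(x <- l) P x.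
Proof. by elim: l => [|a l IH]; rewrite ?big_nil ?big_cons //= IH. Qed.

Definition all12 (s : seq nat) := all (fun c => (c == 1) || (c == 2)) s.

Definition pm (s : seq nat) (i : nat) := \max_(j < size s | j <= i) nth 0 s j.
Definition sm (s : seq nat) (i : nat) := \max_(j < size s | i <= j) nth 0 s j.
Definition M (s : seq nat) := \max_(j < size s) nth 0 s j.

Lemma waterE s : water s = \sum_(i < size s) (minn (pm s i) (sm s i) - nth 0 s i).
Proof. by []. Qed.

Lemma max_recl (F : nat -> nat) (P : nat -> bool) n :
  \max_(j < n.+1 | P j) F j = maxn (if P 0 then F 0 else 0) (\max_(j < n | P j.+1) F j.+1).
Proof.
by rewrite big_mkcond big_ord_recl [in RHS]big_mkcond.
Qed.

Lemma pm_cons0 x s : pm (x :: s) 0 = x.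
Proof.
rewrite /pm (max_recl (fun j => nth 0 (x :: s) j) (fun j => j <= 0)).
by rewrite big_pred0 ?maxn0.
Qed.

Lemma pm_consS x s i : pm (x :: s) i.+1 = maxn x (pm s i).
Proof. by rewrite /pm (max_recl (fun j => nth 0 (x :: s) j) (fun j => j <= i.+1)). Qed.

Lemma sm_cons0 x s : sm (x :: s) 0 = maxn x (M s).
Proof. by rewrite /sm (max_recl (fun j => nth 0 (x :: s) j) (fun j => 0 <= j)). Qed.

Lemma sm_consS x s i : sm (x :: s) i.+1 = sm s i.
Proof. by rewrite /sm (max_recl (fun j => nth 0 (x :: s) j) (fun j => i.+1 <= j)) max0n. Qed.

Lemma water_cons x s :
  water (x :: s) = \sum_(i < size s) (minn (maxn x (pm s i)) (sm s i) - nth 0 s i).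
Proof.
rewrite waterE big_ord_recl.
have H0 : minn (pm (x :: s) 0) (sm (x :: s) 0) - nth 0 (x :: s) 0 = 0.
  by rewrite pm_cons0; apply/eqP; rewrite subn_eq0 geq_minl.
rewrite H0 add0n; apply: eq_bigr => i _.
by rewrite lift0 pm_consS sm_consS.
Qed.

Lemma pm_ge s (i : 'I_(size s)) : nth 0 s i <= pm s i.
Proof. exact: (@leq_bigmax_cond _ (fun j : 'I_(size s) => j <= i) (fun j => nth 0 s j) i). Qed.

Lemma pm_le s i b : all (fun c => c <= b) s -> pm s i <= b.
Proof.
move=> H; apply/bigmax_leqP => j _.
by apply: (allP H); apply: mem_nth.
Qed.

Lemma water_one s : all (fun c => 0 < c) s -> water (1 :: s) = water s.
Proof.
move=> H; rewrite water_cons waterE; apply: eq_bigr => i _.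
congr (minn _ _ - _); apply/maxn_idPr.
have Hp := @pm_ge s i; have Hn : 0 < nth 0 s i by apply: (allP H); apply: mem_nth.
exact: leq_trans Hn Hp.
Qed.

Fixpoint wat1 (s : seq nat) : nat :=
  if s is x :: t then ((x == 1) && (2 \in t)) + wat1 t else 0.

Lemma all12_le2 s : all12 s -> all (fun c => c <= 2) s.
Proof. by move=> H; apply/allP => c /(allP H) /orP[] /eqP ->. Qed.

Lemma all12_pos s : all12 s -> all (fun c => 0 < c) s.
Proof. by move=> H; apply/allP => c /(allP H) /orP[] /eqP ->. Qed.

Lemma M_le s b : all (fun c => c <= b) s -> M s <= b.
Proof.
move=> H; apply/bigmax_leqP => j _.
by apply: (allP H); apply: mem_nth.
Qed.

Lemma M_in2 s : 2 \in s -> 2 <= M s.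
Proof.
move=> H; have Hi : index 2 s < size s by rewrite index_mem.
have := @leq_bigmax _ (fun j : 'I_(size s) => nth 0 s j) (Ordinal Hi).
by rewrite /= nth_index.
Qed.

Lemma M_notin2 s : all12 s -> 2 \notin s -> M s <= 1.
Proof.
move=> H H2; apply/bigmax_leqP => j _.
have Hj : nth 0 s j \in s by apply: mem_nth.
move: (allP H _ Hj) => /orP[/eqP -> //|/eqP E].
by rewrite -E Hj in H2.
Qed.

Lemma sum2 s : all12 s ->
  \sum_(i < size s) (minn 2 (sm s i) - nth 0 s i) = wat1 s.
Proof.
elim: s => [|x t IH]; first by rewrite big_ord0.
rewrite {1}/all12 /= => /andP[Hx Ht]; rewrite big_ord_recl [RHS]/= -(IH Ht).
congr (_ + _); last by apply: eq_bigr => i _; rewrite lift0 sm_consS.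
rewrite (_ : sm (x :: t) ord0 = maxn x (M t)); last exact: sm_cons0.
have Mle : M t <= 2 by apply: M_le; apply: all12_le2.
case/orP: Hx => /eqP -> /=.
  case H2: (2 \in t).
    have -> : M t = 2 by apply/eqP; rewrite eqn_leq Mle M_in2.
    by [].
  have := @M_notin2 t Ht (negbT H2).
  by move=> /maxn_idPl ->.
by apply/eqP; rewrite subn_eq0 geq_minl.
Qed.

Lemma water_two s : all12 s -> water (2 :: s) = wat1 s.
Proof.
move=> H; rewrite water_cons -(@sum2 s H); apply: eq_bigr => i _.
congr (minn _ _ - _); apply/maxn_idPl.
by apply: pm_le; apply: all12_le2.
Qed.

Lemma water_nil : water [::] = 0.
Proof. by rewrite waterE big_ord0. Qed.

Fixpoint wt1 (s : seq nat) : nat :=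
  if s is x :: t then (if x == 2 then 2 else 1 + (2 \in t)) + wt1 t else 0.
Fixpoint wt0 (s : seq nat) : nat :=
  if s is x :: t then (if x == 2 then 2 + wt1 t else 1 + wt0 t) else 0.

Lemma wt1E s : all12 s -> sumn s + wat1 s = wt1 s.
Proof.
elim: s => [|x t IH] //= /andP[Hx Ht]; rewrite -(IH Ht).
by case/orP: Hx => /eqP -> /=; lia.
Qed.

Lemma wt0E s : all12 s -> sumn s + water s = wt0 s.
Proof.
elim: s => [|x t IH]; first by rewrite water_nil.
move=> /= /andP[Hx Ht]; case/orP: Hx => /eqP -> /=.
  by rewrite water_one ?all12_pos // -(IH Ht) addnA.
by rewrite water_two // -(@wt1E t Ht) addnA.
Qed.

Arguments all12_pos {s}.
Arguments all12_le2 {s}.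
Arguments wt0E {s}.
Arguments wt1E {s}.

Definition U12 m := U [:: 1; 2] m.
Arguments U : simpl never.
Arguments U12 : simpl never.

Lemma mem_U12 m s : (s \in U12 m) = (size s <= m) && all12 s.
Proof.
rewrite /U12 mem_U; congr andb; apply: eq_all => c.
by rewrite !inE.
Qed.

Lemma uniq_U12 m : uniq (U12 m).
Proof. exact: uniq_U. Qed.

Lemma size_le_sumn s : all (fun c => 0 < c) s -> size s <= sumn s.
Proof.
elim: s => [|x s IH] //= /andP[Hx Hs].
by have := IH Hs; lia.
Qed.

Lemma elem_le_sumn s x : x \in s -> x <= sumn s.
Proof.
elim: s => [|y s IH] //=; rewrite inE => /orP[/eqP ->|H]; first by lia.
by have := IH H; lia.
Qed.

Lemma wt1_size s : size s <= wt1 s.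
Proof. elim: s => [|x s IH] //=; case: (x == 2) => /=; lia. Qed.

Lemma wt0_size s : size s <= wt0 s.
Proof.
elim: s => [|x s IH] //=; case: (x == 2) => /=; last by lia.
by have := wt1_size s; lia.
Qed.

Lemma is_comp12E m s : is_comp12 m s = all12 s && (sumn s == m).
Proof.
rewrite /is_comp12 /is_comp -/(all12 s); case H: (all12 s).
  by rewrite (all12_pos H) andbT.
by rewrite !andbF.
Qed.

Lemma count_U12_stable (P : pred (seq nat)) m m' :
  (forall s, P s -> all12 s && (size s <= m)) -> m <= m' ->
  count P (U12 m) = count P (U12 m').
Proof.
move=> H Hm; apply: count_eq_uniq; rewrite ?uniq_U12 // => s /H /andP[H1 H2].
by rewrite !mem_U12 H1 H2 (leq_trans H2 Hm).
Qed.

Lemma w_eq m k N : m <= N ->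
  w m k = count (fun s => all12 s && (sumn s == m) && (water s == k)) (U12 N).
Proof.
move=> HN; rewrite /w candE.
rewrite (eq_count (a2 := fun s => all12 s && (sumn s == m) && (water s == k))); last first.
  by move=> s; rewrite is_comp12E.
apply: count_eq_uniq; rewrite ?uniq_U12 ?uniq_U ?iota_uniq //.
move=> s /andP[/andP[H1 /eqP H2] _].
have Hsz : size s <= m by rewrite -H2 size_le_sumn // all12_pos.
rewrite mem_U12 mem_U H1 Hsz (leq_trans Hsz HN) /=.
apply/allP => c Hc; rewrite [mem _ _]inE mem_iota.
have := @elem_le_sumn s c Hc; move: (allP H1 c Hc); rewrite H2 => /orP[] /eqP ->; lia.
Qed.

Lemma sum_single (b : nat -> bool) (j n : nat) :
  \sum_(k < n.+1) (b k && (j == k)) = (j <= n) && b j.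
Proof.
case: (leqP j n) => H.
  have H' : j < n.+1 by [].
  rewrite (bigD1 (Ordinal H')) //= eqxx andbT big1 ?addn0 // => k Hk.
  case: eqP => [E|]; last by rewrite andbF.
  by move: Hk; rewrite -val_eqE /= E eqxx.
rewrite big1 // => k _; case: eqP => [E|]; last by rewrite andbF.
by have := ltn_ord k; lia.
Qed.

Definition W0 n := count (fun s => all12 s && (wt0 s == n)) (U12 n).
Definition W1 n := count (fun s => all12 s && (wt1 s == n)) (U12 n).

Lemma dW0 n : d n = W0 n.
Proof.
rewrite /d (eq_bigr (fun k : 'I_n.+1 =>
   \sum_(s <- U12 n) (all12 s && (sumn s == n - k) && (water s == k)))); last first.
  by move=> k _; rewrite (@w_eq (n - k) k n (leq_subr _ _)) count_sum.
rewrite exchange_big /W0 count_sum; apply: eq_bigr => s _.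
case H: (all12 s); last by rewrite big1.
rewrite -(wt0E H) /=.
transitivity (\sum_(k < n.+1) ((sumn s + water s == n) && (water s == k))).
  apply: eq_bigr => k _; case: (water s =P k) => [E|]; last by rewrite !andbF.
  rewrite !andbT; have := ltn_ord k; rewrite -E => Hk.
  by apply/eqP/eqP; lia.
rewrite (sum_single (fun _ => sumn s + water s == n) (water s) n).
case: leqP => //= Hw.
by case: eqP => //; lia.
Qed.

Ltac side := let s := fresh "s" in move=> s; rewrite /all12 /=; case: (all _ s); try case: (2 \in s); rewrite /= ?andbT ?andbF //; apply/eqP/eqP; lia.

Lemma count_split (T : Type) (a b : pred T) l :
  count a l = count (fun x => a x && b x) l + count (fun x => a x && ~~ b x) l.
Proof. by elim: l => [|x l IH] //=; rewrite IH; case: (a x); case: (b x) => /=; lia. Qed.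

Lemma count_U12_S m (P : pred (seq nat)) :
  count P (U12 m.+1) =
  P [::] + (count (fun s => P (1 :: s)) (U12 m) + count (fun s => P (2 :: s)) (U12 m)).
Proof. by rewrite /U12 count_U_S !big_cons big_nil addn0. Qed.

Lemma ones {s} : all12 s -> 2 \notin s -> s = nseq (size s) 1.
Proof.
elim: s => [|x s IH] //= /andP[Hx Hs]; rewrite inE negb_or => /andP[H2 Hn].
by rewrite -IH //; case/orP: Hx => /eqP E; rewrite E // in H2 *.
Qed.

Lemma wt1_nseq k : wt1 (nseq k 1) = k.
Proof.
elim: k => [|k IH] //=; rewrite IH mem_nseq andbF /=; lia.
Qed.

Lemma count_ones j m : j <= m ->
  count (fun s => all12 s && (2 \notin s) && (wt1 s == j)) (U12 m) = 1.
Proof.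
move=> Hj.
rewrite (eq_count (a2 := pred1 (nseq j 1))); last first.
  move=> s /=; apply/idP/eqP.
    move=> /andP[/andP[H1 H2] /eqP H3].
    rewrite (ones H1 H2) in H3 *; by rewrite wt1_nseq in H3; rewrite H3.
  move=> ->; rewrite wt1_nseq eqxx andbT mem_nseq andbF andbT.
  by rewrite /all12; apply/allP => c; rewrite mem_nseq => /andP[_ /eqP ->].
have Ha : all12 (nseq j 1).
  by rewrite /all12; apply/allP => c; rewrite mem_nseq => /andP[_ /eqP ->].
by rewrite count_uniq_mem ?uniq_U12 // mem_U12 size_nseq Hj Ha.
Qed.

Lemma W1_SS n : W1 n.+2 = 2 * W1 n.
Proof.
rewrite /W1 count_U12_S.
have E : (wt1 [::] == n.+2) = false by [].
rewrite E andbF add0n; clear E.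
rewrite (eq_count (a1 := fun s => all12 (2 :: s) && (wt1 (2 :: s) == n.+2))
                  (a2 := fun s => all12 s && (wt1 s == n))); last first.
  side.
rewrite (count_split _ (fun s => all12 (1 :: s) && (wt1 (1 :: s) == n.+2)) (fun s => 2 \in s)).
rewrite (eq_count (a1 := fun s => all12 (1 :: s) && (wt1 (1 :: s) == n.+2) && (2 \in s))
                  (a2 := fun s => all12 s && (wt1 s == n) && (2 \in s))); last first.
  side.
rewrite (eq_count (a1 := fun s => all12 (1 :: s) && (wt1 (1 :: s) == n.+2) && ~~ (2 \in s))
                  (a2 := fun s => all12 s && (2 \notin s) && (wt1 s == n.+1))); last first.
  side.
rewrite count_ones //.
rewrite [X in _ = 2 * X](@count_U12_stable _ n n.+1) //; last first.
  by move=> s /andP[-> /eqP <-]; rewrite wt1_size.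
rewrite (count_split _ (fun s => all12 s && (wt1 s == n)) (fun s => 2 \in s)).
rewrite (eq_count (a1 := fun s => all12 s && (wt1 s == n) && ~~ (2 \in s))
                  (a2 := fun s => all12 s && (2 \notin s) && (wt1 s == n))); last first.
  by move=> s /=; case: (2 \in s); case: (all12 s); case: (wt1 s == n).
rewrite count_ones //; lia.
Qed.

Lemma W0_S n : W0 n.+1 = W0 n + (if n is m.+1 then W1 m else 0).
Proof.
rewrite /W0 count_U12_S.
have E : (wt0 [::] == n.+1) = false by [].
rewrite E andbF add0n; clear E.
rewrite (eq_count (a1 := fun s => all12 (1 :: s) && (wt0 (1 :: s) == n.+1))
                  (a2 := fun s => all12 s && (wt0 s == n))); last first.
  side.
congr (_ + _).
case: n => [|m].
  rewrite (eq_count (a2 := pred0)) ?count_pred0 // => s /=.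
  by case: (all12 s); rewrite //= ; apply/eqP; lia.
rewrite (eq_count (a1 := fun s => all12 (2 :: s) && (wt0 (2 :: s) == m.+2))
                  (a2 := fun s => all12 s && (wt1 s == m))); last first.
  side.
rewrite /W1 (@count_U12_stable _ m m.+1) //.
by move=> s /andP[-> /eqP <-]; rewrite wt1_size.
Qed.

Definition ble (s : seq nat) := all (fun c => ~~ odd c) (take (size s).-1 s).

Lemma internal_cons x s : internal (x :: s) = take (size s).-1 s.
Proof. by case: s => [|y t] //; rewrite /internal /= drop0. Qed.

Lemma ble_cons x s : ble (x :: s) = if s is [::] then true else ~~ odd x && ble s.
Proof. by case: s. Qed.

Lemma comp_in {k A N s} : is_comp k s -> k <= A -> k <= N -> s \in U (iota 1 A) N.
Proof.
move=> /andP[Hp /eqP Hs] HA HN; rewrite mem_U.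
have Hsz := @size_le_sumn s Hp.
apply/andP; split; first by apply: leq_trans Hsz _; rewrite Hs.
apply/allP => c Hc; rewrite [mem _ _]inE mem_iota.
have := allP Hp c Hc; have := @elem_le_sumn s c Hc; lia.
Qed.

Lemma count_comp_stable (P : pred (seq nat)) k A N A' N' :
  (forall s, P s -> is_comp k s) -> k <= A -> k <= N -> k <= A' -> k <= N' ->
  count P (U (iota 1 A) N) = count P (U (iota 1 A') N').
Proof.
move=> H HA HN HA' HN'; apply: count_eq_uniq; rewrite ?uniq_U ?iota_uniq // => s /H Hs.
by rewrite (comp_in Hs HA HN) (comp_in Hs HA' HN').
Qed.

Lemma is_comp_cons x s k : 0 < x -> x <= k -> is_comp k (x :: s) = is_comp (k - x) s.
Proof.
move=> Hx Hk; rewrite /is_comp /= Hx /=; congr andb.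
by apply/eqP/eqP; lia.
Qed.

Lemma count_andl (T : Type) (b : bool) (P : pred T) l :
  count (fun s => b && P s) l = b * count P l.
Proof.
case: b; rewrite ?mul1n ?mul0n; first exact: eq_count.
by rewrite (eq_count (a2 := pred0)) ?count_pred0.
Qed.

Definition E n := count (fun s => is_comp n s && ble s) (cand n).

Lemma cie_S n : c_ie n.+1 = \sum_(x <- iota 1 n.+1) E (n.+1 - x).
Proof.
rewrite /c_ie candE count_U_S.
have E0 : is_comp n.+1 [::] = false by [].
rewrite E0 add0n; clear E0.
rewrite big_seq [RHS]big_seq; apply: eq_bigr => x; rewrite mem_iota => /andP[H1 H2].
rewrite (eq_count (a2 := fun s => is_comp (n.+1 - x) s && ble s)); last first.
  move=> s /=; rewrite internal_cons is_comp_cons //; lia.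
rewrite /E candE; by apply: (@count_comp_stable _ (n.+1 - x)); [move=> s /andP[] | lia ..].
Qed.

Lemma E_S n : E n.+1 = \sum_(x <- iota 1 n) (~~ odd x) * E (n.+1 - x) + 1.
Proof.
rewrite /E candE count_U_S.
have E0 : is_comp n.+1 [::] = false by [].
rewrite E0 add0n; clear E0.
set V := U _ n.
have -> : iota 1 n.+1 = iota 1 n ++ [:: n.+1] by rewrite -[in LHS](addn1 n) iotaD add1n.
rewrite big_cat big_seq1; congr (_ + _).
  rewrite big_seq [RHS]big_seq; apply: eq_bigr => x; rewrite mem_iota => /andP[H1 H2].
  rewrite (eq_count (a2 := fun s => ~~ odd x && (is_comp (n.+1 - x) s && ble s))); last first.
    move=> s /=; rewrite is_comp_cons; [|lia|lia].
    rewrite ble_cons; case: s => [|y s].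
      by rewrite /is_comp /=; case: eqP => //; lia.
    by case: (is_comp _ _); case: (odd x).
  rewrite count_andl; congr (_ * _).
  rewrite /V candE; by apply: (@count_comp_stable _ (n.+1 - x)); [move=> s /andP[] | lia ..].
rewrite (eq_count (a2 := pred1 [::])); last first.
  move=> s /=; rewrite is_comp_cons // subnn.
  case: s => [|y s] //.
  by case: y => [|y]; rewrite /is_comp /= ?addSn ?andbF.
by rewrite count_uniq_mem /V ?uniq_U ?iota_uniq // mem_U.
Qed.

Lemma E_SS n : E n.+3 = 2 * E n.+1.
Proof.
rewrite (E_S n.+2) (E_S n).
rewrite (_ : iota 1 n.+2 = 1 :: 2 :: iota (2 + 1) n) // iotaDl !big_cons big_map.
rewrite (_ : n.+3 - 2 = n.+1); last by lia.
rewrite (_ : \sum_(j <- iota 1 n) ~~ odd (2 + j) * E (n.+3 - (2 + j)) =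
             \sum_(x <- iota 1 n) ~~ odd x * E (n.+1 - x)).
  rewrite (E_S n) /=; lia.
apply: eq_bigr => x _; rewrite oddD /=.
by rewrite (_ : n.+3 - (2 + x) = n.+1 - x); last by lia.
Qed.

Lemma cie_SS n : c_ie n.+2 = c_ie n.+1 + E n.+1.
Proof.
rewrite (cie_S n.+1) (cie_S n).
rewrite (_ : iota 1 n.+2 = 1 :: iota (1 + 1) n.+1) // iotaDl big_cons big_map.
rewrite (_ : n.+2 - 1 = n.+1); last by lia.
by rewrite addnC; congr (_ + _).
Qed.

Lemma W1E n : W1 n = E n.+1.
Proof.
suff : W1 n = E n.+1 /\ W1 n.+1 = E n.+2 by case.
elim: n => [|n [IH1 IH2]]; first by split; vm_compute.
by split => //; rewrite W1_SS E_SS IH1.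
Qed.

Lemma d_cie n : d n = c_ie n.
Proof.
suff : d n = c_ie n /\ d n.+1 = c_ie n.+1 by case.
elim: n => [|n [IH1 IH2]]; first by rewrite !dW0; split; vm_compute.
by split => //; rewrite cie_SS -IH2 !dW0 W0_S W1E.
Qed.

Lemma W1_closed m : W1 (2 * m) = 2 ^ m /\ W1 (2 * m).+1 = 2 ^ m.
Proof.
elim: m => [|m [IH1 IH2]]; first by split; vm_compute.
by rewrite mulnS add2n !W1_SS IH1 IH2 expnS.
Qed.

Lemma d_closed m : d (2 * m).+1 = 2 ^ m.+1 - 1 /\ d (2 * m).+2 = 3 * 2 ^ m - 1.
Proof.
elim: m => [|m [IH1 IH2]]; first by rewrite !dW0; split; vm_compute.
have Hp : 0 < 2 ^ m by rewrite expn_gt0.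
have [H1 H2] := W1_closed m.
have [H3 H4] := W1_closed m.+1.
rewrite mulnS add2n.
have A1 : d (2 * m).+3 = 2 ^ m.+2 - 1.
  by rewrite dW0 W0_S -dW0 IH2 H2 !expnS; lia.
split => //.
rewrite dW0 W0_S -dW0 A1.
rewrite mulnS add2n in H3.
by rewrite H3 !expnS; lia.
Qed.

Lemma d_rec j : d j.+4 + 2 * d j.+1 = d j.+3 + 2 * d j.+2.
Proof.
rewrite !dW0 !W0_S W1_SS; lia.
Qed.

Lemma d_small : [/\ d 0 = 1, d 1 = 1, d 2 = 2 & d 3 = 3].
Proof. by rewrite !dW0; split; vm_compute. Qed.

Local Open Scope ring_scope.

Lemma part2 (N : nat) :
  take_poly N (\poly_(i < N) ((d i)%:R : int) * (1 - 'X - 2%:P * 'X^2 + 2%:P * 'X^3))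
  = take_poly N (1 - 'X^2 + 'X^3 : {poly int}).
Proof.
apply/polyP => j; rewrite !coef_take_poly; case: ifP => // Hj.
set p := \poly_(i < N) _.
have Hp : forall i, (i <= j)%N -> p`_i = (d i)%:R.
  by move=> i Hi; rewrite coef_poly (leq_ltn_trans Hi Hj).
rewrite !mulrDr !mulrN mulr1 !mulrA !coefD !coefN !coefMX !coefMC !coefE.
have [D0 D1 D2 D3] := d_small.
have R := d_rec (j - 4).
case: j Hj Hp R => [|[|[|[|j]]]] Hj Hp R /=.
- by rewrite Hj D0; lia.
- by rewrite Hj (ltnW Hj) D0 D1; lia.
- by rewrite Hj (ltnW Hj) (ltnW (ltnW Hj)) D0 D1 D2; lia.
- by rewrite Hj (ltnW Hj) (ltnW (ltnW Hj)) (ltnW (ltnW (ltnW Hj))) D0 D1 D2 D3; lia.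
rewrite Hj (ltnW Hj) (ltnW (ltnW Hj)) (ltnW (ltnW (ltnW Hj))).
rewrite (_ : (j.+4 - 4)%N = j) in R; last by lia.
idtac.
lia.
Qed.

Theorem theorem2p5 :
  (forall n : nat, d n = c_ie n)
  /\ (forall N : nat,
        take_poly N (\poly_(i < N) ((d i)%:R : int) * (1 - 'X - 2%:P * 'X^2 + 2%:P * 'X^3))
        = take_poly N (1 - 'X^2 + 'X^3 : {poly int}))
  /\ (forall m : nat, (1 <= m)%N ->
        d (2 * m - 1) = (2 ^ m - 1)%N /\ d (2 * m) = (3 * 2 ^ (m - 1) - 1)%N).
Proof.
split; first exact: d_cie.
split; first exact: part2.
move=> m; case: m => [|k] // _.
have [H1 H2] := d_closed k.
rewrite (_ : (2 * k.+1 - 1)%N = (2 * k).+1); last by lia.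
rewrite (_ : (2 * k.+1)%N = (2 * k).+2); last by lia.
by rewrite (_ : (k.+1 - 1)%N = k); last by lia.
Qed.
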